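(* Assume coarse consistency, coarse positivity and coarse time-varying conditional parallel trends (all defined in the context). Then the true coarse blip functions $\gamma^{c*}$ satisfy, for all $0\le m<k\le K$, almost surely on $\{T\ge m\}$, $$E[H^c_{mk}(\gamma^{c*})-H^c_{m,k-1}(\gamma^{c*})\mid T\ge m,A_m,\bar L_m]=E[H^c_{mk}(\gamma^{c*})-H^c_{m,k-1}(\gamma^{c*})\mid T>m,\bar L_m]. \qquad ( * )$$ Moreover, $\gamma^{c*}$ is the unique vector of functions with this property. If $\gamma^c=(\gamma^c_{mk}(\bar l_m,a_m))_{0\le m<k\le K}$ satisfies $( * )$ for all $0\le m<k\le K$, then $\gamma^c_{mk}(\bar L_m,A_m)=\gamma^{c*}_{mk}(\bar L_m,A_m)$ almost surely on $\{T=m\}$ for all $m<k$.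
   Context: **Data.** Subjects are observed at times $0,1,\dots,K$. At each time $m$ the data $(Z_m,Y_m,A_m)$ are collected in that temporal order: - $A_m$ is the treatment at time $m$, coded so that $0$ is the baseline level; - $Y_m$ is the outcome; - $Z_m$ are other covariates. For a time-varying variable $X$, write $\bar X_m=(X_0,\dots,X_m)$; negative-index variables are null. Define $\bar L_m=(\bar Z_m,\bar Y_{m-1},\bar A_{m-1})$. **Treatment initiation.** $T=\min\{m:A_m\neq 0\}\in\{0,\dots,K,\infty\}$, with $T=\infty$ if treatment is never initiated. **Counterfactuals.** $Y_k(m,a_m)$ is the counterfactual outcome at time $k$ under first initiating treatment at time $m$ at value $a_m$. $Y_k(\infty)$ is the counterfactual under never initiating. Also $Y_k(m,a_m)=Y_k(\infty)$ for $k\le m$. **Assumptions.** - Coarse consistency: $Y_k=Y_k(T,A_T)$ on $\{T<k\}$ and $Y_k=Y_k(\infty)$ on $\{T\ge k\}$. - Coarse positivity: for every $m$, $P(A_m=0\mid\bar L_m,T\ge m)>0$ (positive density at $0$) almost surely on $\{T\ge m\}$. - Coarse parallel trends: for all $m<k$, $$E[Y_k(\infty)-Y_{k-1}(\infty)\mid T=m,A_m,\bar L_m]=E[Y_k(\infty)-Y_{k-1}(\infty)\mid T>m,\bar L_m].$$ **Coarse blip functions.** $$\gamma^{c*}_{mk}(\bar l_m,a_m)\equiv E[Y_k(m,a_m)-Y_k(\infty)\mid T=m,A_m=a_m,\bar L_m=\bar l_m].$$ **Blipped-down outcomes.** - $H^c_{mk}(\gamma^c)\equiv Y_k-\sum_{j=m}^{k-1}\gamma^c_{jk}(\bar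 L_j,A_j)\mathbb 1\{T=j\}$ for $k>m$; - $H^c_{mm}(\gamma^c)\equiv Y_m$. *)

(* Defs.v *)
From HB Require Import structures.
From mathcomp Require Import all_boot all_order all_algebra.
From mathcomp Require Import all_classical all_reals all_analysis.
Set Implicit Arguments. Unset Strict Implicit. Unset Printing Implicit Defensive.
Import Order.TTheory GRing.Theory Num.Theory.
Local Open Scope classical_set_scope.
Local Open Scope ring_scope.

Section CoarseDefs.
Context {R : realType} {d : measure_display} {Omega : measurableType d}.

(* {T >= m}: no treatment before time m (T = min{j : A_j <> 0}, or oo) *)
Definition Tge (A : nat -> Omega -> R) (m : nat) : set Omega :=
  [set w | forall j, (j < m)%N -> A j w = 0].
Definition Teq (A : nat -> Omega -> R) (m : nat) : set Omega :=
  Tge A m `&` [set w | A m w != 0].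
Definition Tgt (A : nat -> Omega -> R) (m : nat) : set Omega := Tge A m.+1.

(* generators of sigma(Lbar_m), Lbar_m = (Zbar_m, Ybar_{m-1}, Abar_{m-1}) *)
Definition hist_gen {dz : measure_display} {Zt : measurableType dz}
  (Z : nat -> Omega -> Zt) (Y A : nat -> Omega -> R) (m : nat) : set (set Omega) :=
  [set S | (exists j (U : set Zt), (j <= m)%N /\ measurable U /\ S = Z j @^-1` U)
        \/ (exists j (U : set R), (j < m)%N /\ measurable U /\ S = Y j @^-1` U)
        \/ (exists j (U : set R), (j < m)%N /\ measurable U /\ S = A j @^-1` U)].

Definition Lsig {dz : measure_display} {Zt : measurableType dz}
  (Z : nat -> Omega -> Zt) (Y A : nat -> Omega -> R) (m : nat) : set (set Omega) :=
  <<s hist_gen Z Y A m >>.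

Definition LAsig {dz : measure_display} {Zt : measurableType dz}
  (Z : nat -> Omega -> Zt) (Y A : nat -> Omega -> R) (m : nat) : set (set Omega) :=
  <<s hist_gen Z Y A m `|` [set S | exists U : set R, measurable U /\ S = A m @^-1` U] >>.

(* f is a version of E[X | B, G] on the event B: f is G-measurable, X and f are
   integrable on B, and E[X 1_B 1_S] = E[f 1_B 1_S] for every S in G. *)
Definition cexp_version (P : probability Omega R) (G : set (set Omega))
  (B : set Omega) (X f : Omega -> R) : Prop :=
  [/\ (forall U : set R, measurable U -> G (f @^-1` U)),
      P.-integrable B (EFin \o X),
      P.-integrable B (EFin \o f) &
      forall S, G S ->
        (\int[P]_(w in B `&` S) (X w)%:E = \int[P]_(w in B `&` S) (f w)%:E)%E].

(* blipped-down outcome H^c_{mk}(gamma); for k = m the sum is empty, giving Y_m *)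
Definition Hc (Y A : nat -> Omega -> R) (gamma : nat -> nat -> Omega -> R)
  (m k : nat) (w : Omega) : R :=
  Y k w - \sum_(m <= j < k) gamma j k w * (\1_(Teq A j) w : R).

Definition coarse_star {dz : measure_display} {Zt : measurableType dz}
  (P : probability Omega R) (Z : nat -> Omega -> Zt) (Y A : nat -> Omega -> R)
  (gamma : nat -> nat -> Omega -> R) (m k : nat) : Prop :=
  forall f g : Omega -> R,
    cexp_version P (LAsig Z Y A m) (Tge A m)
      (fun w => Hc Y A gamma m k w - Hc Y A gamma m k.-1 w) f ->
    cexp_version P (Lsig Z Y A m) (Tgt A m)
      (fun w => Hc Y A gamma m k w - Hc Y A gamma m k.-1 w) g ->
    {ae P, forall w, Tge A m w -> f w = g w}.

End CoarseDefs.

(* Main.v *)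
Require Import Defs.
From HB Require Import structures.
From mathcomp Require Import all_boot all_order all_algebra.
From mathcomp Require Import all_classical all_reals all_analysis.
From mathcomp Require Import measurable_realfun lebesgue_measure.
From mathcomp Require Import zify ring lra.
Import Order.TTheory GRing.Theory Num.Theory.
Local Open Scope classical_set_scope.
Local Open Scope ring_scope.

Module Part1.

Section Sub.
Context {R : realType} {d : measure_display} {Omega : measurableType d}.
Variable (P : probability Omega R).

Lemma gen_sub (H : set (set Omega)) : H `<=` measurable -> <<s H>> `<=` measurable.
Proof. move=> HM; apply: smallest_sub => //; exact: sigma_algebra_measurable. Qed.
Arguments gen_sub {H}.

Definition muB (H : set (set Omega)) (HM : H `<=` measurable) (B : set Omega)
  (mB : measurable B) : set (g_sigma_algebraType H) -> \bar R :=
  fun A => P (A `&` B).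
Arguments muB {H} HM {B} mB.

Section muB.
Variables (H : set (set Omega)) (HM : H `<=` measurable) (B : set Omega) (mB : measurable B).
Local Notation mu := (muB HM mB).

Let mu0 : mu set0 = 0%E. Proof. by rewrite /mu/muB set0I measure0. Qed.
Let mu_ge0 (A : set _) : (0 <= mu A)%E.
Proof. by apply: measure_ge0. Qed.
Let mu_sigma_additive : semi_sigma_additive mu.
Proof.
move=> F mF tF mU; rewrite /mu/muB setI_bigcupl.
apply: measure_semi_sigma_additive.
- move=> n; apply: measurableI => //. exact (gen_sub HM _ (mF n)).
- apply/trivIsetP => i j _ _ ij.
  move/trivIsetP : tF => /(_ i j Logic.I Logic.I ij).
  by rewrite setIACA => ->; rewrite set0I.
- rewrite -setI_bigcupl; apply: measurableI => //; exact (gen_sub HM _ mU).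
Qed.
HB.instance Definition _ := isMeasure.Build _ _ _ mu mu0 mu_ge0 mu_sigma_additive.
Let mu_fin : fin_num_fun mu.
Proof.
move=> A mA; rewrite /mu/muB; apply: fin_num_measure.
apply: measurableI => //; exact (gen_sub HM _ mA).
Qed.
HB.instance Definition _ := @Measure_isFinite.Build _ _ _ mu mu_fin.
End muB.


Local Open Scope ereal_scope.

Lemma mrestr_integral (B A : set Omega) (mB : measurable B) (mA : measurable A)
  (f : Omega -> \bar R) : measurable_fun A f ->
  \int[mrestr P mB]_(x in A) f x = \int[P]_(x in (A : set Omega) `&` B) f x.
Proof.
move=> mf.
rewrite -{1}(setUIDK A B) integral_setU //; [|exact: measurableI|exact: measurableD|by rewrite setUIDK|]; last first.
  by apply/disj_setPS => x [[_ Bx] [_ nBx]].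
rewrite [X in _ + X]null_set_integral //; last 3 first.
- exact: measurableD.
- by apply: measurable_funS mf => //; exact: subDsetl.
- change (P ((A `\` B) `&` B) = 0); by rewrite setDKI measure0.
rewrite adde0; apply: eq_measure_integral => C mC CAB.
change (P (C `&` B) = P C); by rewrite setIidl // => x /CAB [].
Qed.

Section transfer.
Variables (H : set (set Omega)) (HM : H `<=` measurable) (B : set Omega) (mB : measurable B).
Local Notation GT := (g_sigma_algebraType H).

Definition idG : Omega -> GT := id.
Lemma measurable_idG : measurable_fun setT idG.
Proof. by move=> _ U mU; rewrite setTI; exact (gen_sub HM _ mU). Qed.

Lemma mfun_GT {d2 : measure_display} {T' : measurableType d2} {f : GT -> T'} {D : set Omega} : measurable D ->
  measurable_fun (setT : set GT) f -> measurable_fun D (f : Omega -> T').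
Proof.
move=> mD mf _ U mU; apply: measurableI => //.
have := mf measurableT U mU; rewrite setTI => h; exact (gen_sub HM _ h).
Qed.

Lemma muB_ge0_integral (A : set GT) (f : Omega -> \bar R) : measurable A ->
  measurable_fun (setT : set GT) (f : GT -> \bar R) -> (forall x, 0 <= f x) ->
  \int[muB HM mB]_(x in A) f x = \int[P]_(x in (A : set Omega) `&` B) f x.
Proof.
move=> mA mf f0.
change (\int[pushforward (mrestr P mB) idG]_(x in A) f x = \int[P]_(x in A `&` B) f x).
rewrite (ge0_integral_pushforward measurable_idG) //;
  try (by apply: measurable_funTS); try (by move=> x _; exact: f0).
have mA' : measurable (A : set Omega) by exact (gen_sub HM _ mA).
rewrite mrestr_integral //.
exact (mfun_GT mA' mf).
Qed.

Lemma muB_ge0_integralT (f : Omega -> \bar R) :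
  measurable_fun (setT : set GT) (f : GT -> \bar R) -> (forall x, 0 <= f x) ->
  \int[muB HM mB]_(x in setT) f x = \int[P]_(x in B) f x.
Proof.
move=> mf f0; rewrite (muB_ge0_integral _ _ measurableT mf f0).
by congr integral; exact: setTI.
Qed.

Lemma muB_integral (A : set GT) (f : Omega -> \bar R) : measurable A ->
  measurable_fun (setT : set GT) (f : GT -> \bar R) ->
  \int[muB HM mB]_(x in A) f x = \int[P]_(x in (A : set Omega) `&` B) f x.
Proof.
move=> mA mf; rewrite integralE [RHS]integralE.
rewrite !muB_ge0_integral //.
- exact: measurable_funeneg.
- exact: measurable_funepos.
Qed.

Lemma muB_integrable (f : Omega -> \bar R) :
  measurable_fun (setT : set GT) (f : GT -> \bar R) ->
  (muB HM mB).-integrable setT f <-> P.-integrable B f.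
Proof.
move=> mf.
have maf : measurable_fun (setT : set GT) ((abse \o f) : GT -> \bar R).
  exact: measurableT_comp mf.
split => /integrableP [_ hf]; apply/integrableP; split.
- exact (mfun_GT mB mf).
- by move: hf; rewrite (muB_ge0_integralT _ maf (fun x => abse_ge0 _)).
- exact: mf.
- by rewrite (muB_ge0_integralT _ maf (fun x => abse_ge0 _)).
Qed.
End transfer.

Definition nuX (H : set (set Omega)) (HM : H `<=` measurable) (X : Omega -> \bar R)
  (intX : P.-integrable setT X) : set (g_sigma_algebraType H) -> \bar R :=
  fun S => \int[P]_(x in S) X x.
Arguments nuX {H} HM {X} intX.

Section nuX.
Variables (H : set (set Omega)) (HM : H `<=` measurable) (X : Omega -> \bar R)
  (intX : P.-integrable setT X).
Local Notation nu := (nuX HM intX).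
Let nu0 : nu set0 = 0. Proof. by rewrite /nu/nuX integral_set0. Qed.
Let finnu A : measurable A -> nu A \is a fin_num.
Proof.
move=> mA; have mA' : measurable (A : set Omega) by exact (gen_sub HM _ mA).
by apply: integrable_fin_num => //=; exact: integrableS intX.
Qed.
Let snu : semi_sigma_additive nu.
Proof.
move=> F mF tF mU.
exact: (@charge_semi_sigma_additive _ _ _ (induced_charge intX) F
  (fun n => gen_sub HM _ (mF n)) tF (gen_sub HM _ mU)).
Qed.
HB.instance Definition _ := isCharge.Build _ _ _ nu nu0 finnu snu.
End nuX.

Lemma cexp_exists (H : set (set Omega)) (HM : H `<=` measurable) (B : set Omega)
  (mB : measurable B) (X : Omega -> R) :
  P.-integrable B (EFin \o X) -> exists f : Omega -> R, cexp_version P <<s H >> B X f.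
Proof.
move=> intX.
have intXB : P.-integrable setT ((EFin \o X) \_ B) by apply/(integrable_mkcond _ mB).
pose nu := nuX HM intXB.
pose mu := muB HM mB.
have dom : nu `<< mu.
  apply/null_content_dominatesP; move=> A mA muA0.
  have mA' : measurable (A : set Omega) by exact (gen_sub HM _ mA).
  rewrite /nu/nuX -integral_mkcondr null_set_integral //.
  - exact: measurableI.
  - apply: measurable_funS (measurable_int _ intX) => //; exact: subIsetr.
pose g := Radon_Nikodym nu mu.
have mg : measurable_fun (setT : set (g_sigma_algebraType H)) g.
  by apply: measurable_int; exact: Radon_Nikodym_integrable.
pose f := fun x => fine (g x).
have mf : measurable_fun (setT : set (g_sigma_algebraType H)) f.
  exact: measurableT_comp (fine_measurable measurableT) mg.
have gf x : g x = (f x)%:E by rewrite /f fineK //; exact: Radon_Nikodym_fin_num.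
have mEf : measurable_fun (setT : set (g_sigma_algebraType H)) (EFin \o f).
  exact: measurableT_comp mf.
exists f; split => //.
- move=> U mU; have := mf measurableT U mU; rewrite setTI => h; exact h.
- apply/(muB_integrable _ HM _ mB _ mEf).
  apply: (eq_integrable measurableT g) (Radon_Nikodym_integrable dom) => x _; exact: gf.
- move=> S mS.
  have mS' : measurable (S : set Omega) by exact (gen_sub HM _ mS).
  rewrite setIC integral_mkcondr.
  change (nu S = \int[P]_(w in S `&` B) (f w)%:E).
  transitivity (\int[mu]_(x in S) g x); first exact: (Radon_Nikodym_integral dom mS).
  rewrite (eq_integral (EFin \o f)); last by move=> x _; exact: gf.
  by rewrite (muB_integral _ HM _ mB _ _ mS mEf).
Qed.

Lemma GT_mfun (H : set (set Omega)) (f : Omega -> R) :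
  (forall U, measurable U -> <<s H >> (f @^-1` U)) ->
  measurable_fun (setT : set (g_sigma_algebraType H)) (EFin \o f).
Proof.
move=> hf; apply: measurableT_comp => //.
by move=> _ U mU; rewrite setTI; exact: hf.
Qed.

Lemma cexp_unique (H : set (set Omega)) (HM : H `<=` measurable) (B : set Omega)
  (mB : measurable B) (f1 f2 : Omega -> R) :
  (forall U, measurable U -> <<s H >> (f1 @^-1` U)) ->
  (forall U, measurable U -> <<s H >> (f2 @^-1` U)) ->
  P.-integrable B (EFin \o f1) ->
  (forall S, <<s H >> S ->
     \int[P]_(w in B `&` S) (f1 w)%:E = \int[P]_(w in B `&` S) (f2 w)%:E) ->
  {ae P, forall w, B w -> f1 w = f2 w}.
Proof.
move=> h1 h2 i1 eq12.
have m1 := GT_mfun H f1 h1; have m2 := GT_mfun H f2 h2.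
pose mu := muB HM mB.
have ae : ae_eq mu setT (EFin \o f1) (EFin \o f2).
  apply: (@integral_ae_eq _ _ _ mu setT measurableT (EFin \o f2) (EFin \o f1)
    ((muB_integrable _ HM _ mB _ m1).2 i1) m2) => E _ mE. rewrite (muB_integral _ HM _ mB _ _ mE m1) (muB_integral _ HM _ mB _ _ mE m2).
  by rewrite !(setIC (E : set Omega)); apply: eq12.
have [N [mN N0 sN]] := ae.
exists (N `&` B); split.
- apply: measurableI => //; exact (gen_sub HM _ mN).
- by move: N0; rewrite /mu/muB.
- move=> w /= nw; split => //.
  + apply: sN => /= h; apply: nw => Bw; have := h Logic.I; move=> [] //.
  + by apply: contra_notP nw => nB Bw.
Qed.

End Sub.

End Part1.
Import Part1.

Module Part2.
Set Implicit Arguments. Unset Strict Implicit. Unset Printing Implicit Defensive.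

Lemma down_ind (Q : nat -> Prop) lo k : (lo <= k)%N -> Q k ->
  (forall i, (lo <= i < k)%N -> Q i.+1 -> Q i) -> Q lo.
Proof.
move=> lok Qk step.
suff H : forall n, (n <= k - lo)%N -> Q (k - n)%N.
  by have := H (k - lo)%N (leqnn _); rewrite subKn.
elim=> [|n IH] hn; first by rewrite subn0.
apply: step; first by apply/andP; split; lia.
have -> : (k - n.+1).+1 = (k - n)%N by lia.
by apply: IH; lia.
Qed.

Section Sets.
Context {R : realType} {d : measure_display} {Omega : measurableType d}.
Variables (dz : measure_display) (Zt : measurableType dz)
  (Z : nat -> Omega -> Zt) (Y A : nat -> Omega -> R).
Hypotheses (mZ : forall j, measurable_fun setT (Z j))
  (mY : forall j, measurable_fun setT (Y j))
  (mA : forall j, measurable_fun setT (A j)).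

Definition GL m := hist_gen Z Y A m.
Definition GLA m := hist_gen Z Y A m `|`
  [set S | exists U : set R, measurable U /\ S = A m @^-1` U].

Lemma pre_meas (d2 : measure_display) (T2 : measurableType d2) (f : Omega -> T2)
  (U : set T2) : measurable_fun setT f -> measurable U -> measurable (f @^-1` U).
Proof. by move=> mf mU; rewrite -[X in measurable X]setTI; exact: mf. Qed.

Lemma GL_meas m : GL m `<=` measurable.
Proof.
move=> S [[j [U [_ [mU ->]]]]|[[j [U [_ [mU ->]]]]|[j [U [_ [mU ->]]]]]];
  exact: pre_meas.
Qed.

Lemma GLA_meas m : GLA m `<=` measurable.
Proof.
move=> S [/GL_meas //|[U [mU ->]]]; exact: pre_meas.
Qed.

Lemma GL_GLA m : GL m `<=` GLA m.
Proof. by move=> S h; left. Qed.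

Lemma GL_mono m j : (m <= j)%N -> GL m `<=` GL j.
Proof.
move=> mj S [[i [U [hi [mU ->]]]]|[[i [U [hi [mU ->]]]]|[i [U [hi [mU ->]]]]]].
- by left; exists i, U; split => //; lia.
- by right; left; exists i, U; split => //; lia.
- by right; right; exists i, U; split => //; lia.
Qed.

Lemma sig_mono (G1 G2 : set (set Omega)) : G1 `<=` G2 -> <<s G1 >> `<=` <<s G2 >>.
Proof.
move=> h; apply: smallest_sub; first exact: smallest_sigma_algebra.
by move=> S /h; exact: sub_gen_smallest.
Qed.

Lemma L_LA m j : (m <= j)%N -> Lsig Z Y A m `<=` LAsig Z Y A j.
Proof.
move=> mj; apply: sig_mono => S /(GL_mono mj) h; by left.
Qed.

Lemma L_mono m j : (m <= j)%N -> Lsig Z Y A m `<=` Lsig Z Y A j.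
Proof. by move=> mj; apply: sig_mono; exact: GL_mono. Qed.

Lemma LA_meas m : LAsig Z Y A m `<=` measurable.
Proof. exact (gen_sub _ (@GLA_meas m)). Qed.
Lemma L_meas m : Lsig Z Y A m `<=` measurable.
Proof. exact (gen_sub _ (@GL_meas m)). Qed.

Lemma TgeS n : Tge A n.+1 = Tge A n `&` (A n @^-1` [set 0]).
Proof.
apply/seteqP; split => w /=.
- move=> h; split; [move=> j jn; apply: h; lia| apply: h; lia].
- move=> [h1 h2] j jn; have [jn'|->] : (j < n)%N \/ j = n by lia.
  + exact: h1.
  + exact: h2.
Qed.

Lemma Tge0 : Tge A 0 = setT.
Proof. by apply/seteqP; split => w // _ j; rewrite ltn0. Qed.

Lemma Tge_L m n : (n <= m)%N -> Lsig Z Y A m (Tge A n).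
Proof.
elim: n => [|n IH] nm.
  rewrite Tge0; exact: (@measurableT _ (g_sigma_algebraType (GL m))).
rewrite TgeS.
have h1 : Lsig Z Y A m (Tge A n) by apply: IH; lia.
have h2 : Lsig Z Y A m (A n @^-1` [set 0]).
  apply: sub_gen_smallest; right; right; exists n, [set 0]; split => //; lia.
exact: (@measurableI _ (g_sigma_algebraType (GL m)) _ _ h1 h2).
Qed.

Lemma Am_LA m (U : set R) : measurable U -> LAsig Z Y A m (A m @^-1` U).
Proof. by move=> mU; apply: sub_gen_smallest; right; exists U. Qed.

Lemma Teq_LA m : LAsig Z Y A m (Teq A m).
Proof.
have h1 : LAsig Z Y A m (Tge A m) by apply: L_LA (leqnn m) _ (Tge_L (leqnn m)).
have h2 : LAsig Z Y A m (A m @^-1` (~` [set 0])).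
  apply: Am_LA; exact: measurableC.
have -> : Teq A m = Tge A m `&` (A m @^-1` (~` [set 0])).
  apply/seteqP; split => w [h h'].
  + by split => //= /eqP; rewrite (negbTE h').
  + by split => //; apply/eqP.
exact: (@measurableI _ (g_sigma_algebraType (GLA m)) _ _ h1 h2).
Qed.

Lemma Tgt_LA m : LAsig Z Y A m (Tgt A m).
Proof.
have h1 : LAsig Z Y A m (Tge A m) by apply: L_LA (leqnn m) _ (Tge_L (leqnn m)).
have h2 : LAsig Z Y A m (A m @^-1` [set 0]) by apply: Am_LA.
rewrite /Tgt TgeS.
exact: (@measurableI _ (g_sigma_algebraType (GLA m)) _ _ h1 h2).
Qed.

Lemma Tge_meas n : measurable (Tge A n).
Proof. exact (@L_meas n _ (Tge_L (leqnn n))). Qed.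
Lemma Teq_meas n : measurable (Teq A n).
Proof. exact (@LA_meas n _ (@Teq_LA n)). Qed.
Lemma Tgt_meas n : measurable (Tgt A n).
Proof. exact (@LA_meas n _ (@Tgt_LA n)). Qed.

Lemma Teq_Tge j w : Teq A j w -> Tge A j w.
Proof. by case. Qed.
Lemma Tge_le i j w : (i <= j)%N -> Tge A j w -> Tge A i w.
Proof. by move=> ij h l li; apply: h; lia. Qed.
Lemma Teq_notTge i j w : (i < j)%N -> Teq A i w -> ~ Tge A j w.
Proof. by move=> ij [_ /negP h] h'; apply: h; apply/eqP; apply: h'. Qed.
Lemma Teq_uniq i j w : Teq A i w -> Teq A j w -> i = j.
Proof.
move=> hi hj; have [ij|ji|//] := ltngtP i j.
- by exfalso; apply: (Teq_notTge ij hi); exact: Teq_Tge.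
- by exfalso; apply: (Teq_notTge ji hj); exact: Teq_Tge.
Qed.
Lemma Tge_split j w : Tge A j w -> Teq A j w \/ Tge A j.+1 w.
Proof.
move=> h; have [/eqP e|ne] := boolP (A j w == 0).
- by right; rewrite TgeS; split.
- by left; split.
Qed.
Lemma Tge_splitE j : Tge A j = Teq A j `|` Tge A j.+1.
Proof.
apply/seteqP; split => w.
- by move/Tge_split.
- by case=> [/Teq_Tge|/Tge_le]; [|apply; lia].
Qed.
Lemma Teq_Tge_disj j : [disjoint Teq A j & Tge A j.+1].
Proof.
by apply/disj_setPS => w [h1 h2]; apply: (Teq_notTge (ltnSn j) h1 h2).
Qed.

Lemma trace_LA_L m S : LAsig Z Y A m S ->
  exists S', Lsig Z Y A m S' /\ S `&` Tgt A m = S' `&` Tgt A m.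
Proof.
pose C := [set S | exists S', Lsig Z Y A m S' /\ S `&` Tgt A m = S' `&` Tgt A m].
suff : LAsig Z Y A m `<=` C by move=> h /h.
have [L0 LC LU] := @smallest_sigma_algebra _ setT (GL m).
apply: smallest_sub.
  split.
  - by exists set0; split.
  - move=> S0 [S' [LS' e]]; exists (setT `\` S'); split; first exact: LC.
    apply/seteqP; split => w [[_ nS] hw]; split => //; split => // h.
    + apply: nS; have : (S' `&` Tgt A m) w by split.
      by rewrite -e => -[].
    + apply: nS; have : (S0 `&` Tgt A m) w by split.
      by rewrite e => -[].
  - move=> F hF; have [G hG] := choice hF.
    exists (\bigcup_k G k); split; first by apply: LU => n; have [] := hG n.
    apply/seteqP; split => w [[k _ hk] hw]; split => //.
    + exists k => //; have [_ e] := hG k.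
      have : (F k `&` Tgt A m) w by split.
      by rewrite e => -[].
    + exists k => //; have [_ e] := hG k.
      have : (G k `&` Tgt A m) w by split.
      by rewrite -e => -[].
move=> S0 [h|[U [mU ->]]].
  by exists S0; split => //; exact: sub_gen_smallest.
have Tz w : Tgt A m w -> A m w = 0 by move=> h; apply: h.
case: (pselect (U 0)) => U0.
- exists setT; split; first exact: (@measurableT _ (g_sigma_algebraType (GL m))).
  apply/seteqP; split => w [h hw]; split => //=.
  by rewrite Tz.
- exists set0; split => //.
  apply/seteqP; split => w [h hw] //=.
  by move: h => /=; rewrite Tz.
Qed.

End Sets.

Lemma fin_sub0 (R : realType) (x y : \bar R) : x \is a fin_num -> y \is a fin_num ->
  (x - y = 0)%E <-> x = y.
Proof.
move: x y => [x| |] [y| |] //= _ _; split.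
- by move=> /eqP; rewrite -EFinB eqe subr_eq0 => /eqP ->.
- by move=> [->]; rewrite -EFinB subrr.
Qed.

Lemma sum_only (R : realType) (F : nat -> R) m n j :
  (forall i, i != j -> F i = 0) ->
  \sum_(m <= i < n) F i = if (m <= j < n)%N then F j else 0.
Proof.
move=> F0; elim: n => [|n IH].
  by rewrite big_geq // ltn0 andbF.
have [mn|nm] := leqP m n; last first.
  rewrite big_geq //; case: ifP => // /andP[h1 h2]; lia.
rewrite big_nat_recr //= IH.
have [->|jn] := eqVneq j n.
- rewrite ltnn andbF mn /= ltnSn add0r //.
- rewrite (F0 n) ?addr0; last by rewrite eq_sym.
  have -> : (j < n.+1)%N = (j < n)%N by move: jn; lia.
  by [].
Qed.

Section Int.
Context {R : realType} {d : measure_display} {Omega : measurableType d}.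
Variable (P : probability Omega R).
Local Open Scope ereal_scope.

Definition Int (D : set Omega) (h : Omega -> R) := \int[P]_(w in D) (h w)%:E.

Lemma Int_fin D h : measurable D -> P.-integrable D (EFin \o h) -> Int D h \is a fin_num.
Proof. by move=> mD ih; apply: integrable_fin_num. Qed.

Lemma IntB D h1 h2 : measurable D -> P.-integrable D (EFin \o h1) ->
  P.-integrable D (EFin \o h2) ->
  Int D (fun w => h1 w - h2 w)%R = Int D h1 - Int D h2.
Proof.
move=> mD i1 i2; rewrite /Int -integralB //.
Qed.

Lemma IntD D h1 h2 : measurable D -> P.-integrable D (EFin \o h1) ->
  P.-integrable D (EFin \o h2) ->
  Int D (fun w => h1 w + h2 w)%R = Int D h1 + Int D h2.
Proof.
move=> mD i1 i2; rewrite /Int -integralD //.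
Qed.

Lemma Int_ext D h1 h2 : (forall w, D w -> h1 w = h2 w) -> Int D h1 = Int D h2.
Proof.
move=> e; rewrite /Int; apply: eq_integral => w /[!inE] Dw; by rewrite e.
Qed.

Lemma Int0 D h : (forall w, D w -> h w = 0%R) -> Int D h = 0.
Proof.
move=> e; rewrite (@Int_ext D h (fun=> 0%R)) // /Int; exact: integral0.
Qed.

Lemma IntU D1 D2 h : measurable D1 -> measurable D2 -> [disjoint D1 & D2] ->
  P.-integrable setT (EFin \o h) ->
  Int (D1 `|` D2) h = Int D1 h + Int D2 h.
Proof.
move=> m1 m2 dj ih; rewrite /Int integral_setU //.
- exact: measurable_funTS (measurable_int _ ih).
Qed.

Lemma Int_eq_sub D h1 h2 : measurable D -> P.-integrable D (EFin \o h1) ->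
  P.-integrable D (EFin \o h2) ->
  (Int D (fun w => h1 w - h2 w)%R = 0 <-> Int D h1 = Int D h2).
Proof.
move=> mD i1 i2; rewrite IntB //; apply: fin_sub0; exact: Int_fin.
Qed.

Lemma integrable_indic_mul D (g : Omega -> R) : measurable D ->
  P.-integrable D (EFin \o g) ->
  P.-integrable setT (EFin \o (fun w => g w * \1_D w)%R).
Proof.
move=> mD ig; have := (integrable_mkcond _ mD).1 ig.
apply: eq_integrable => // w _; rewrite /patch /= indicE.
by case: ifP => _; rewrite ?mulr1 ?mulr0.
Qed.

End Int.

Section Pointwise.
Context {R : realType} {d : measure_display} {Omega : measurableType d}.
Variables (P : probability Omega R) (Y A : nat -> Omega -> R).

Lemma Tge_or_Teq k w : Tge A k w \/ exists j, (j < k)%N /\ Teq A j w.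
Proof.
elim: k => [|k [h|[j [jk h]]]].
- by left; rewrite Tge0.
- case: (Tge_split h) => h'; [right; exists k; split => //| by left].
- by right; exists j; split => //; lia.
Qed.

Lemma indicN1 (S : set Omega) w : S w -> \1_S w = 1 :> R.
Proof. by move=> h; rewrite indicE mem_set. Qed.
Lemma indicN0 (S : set Omega) w : ~ S w -> \1_S w = 0 :> R.
Proof. by move=> h; rewrite indicE memNset. Qed.

Lemma sum_Teq (g : nat -> Omega -> R) m n j w : (m <= j)%N -> Teq A j w ->
  \sum_(m <= i < n) g i w * \1_(Teq A i) w = if (j < n)%N then g j w else 0.
Proof.
move=> mj hj; rewrite (@sum_only _ _ _ _ j).
- by rewrite mj /= indicN1 // mulr1.
- move=> i ij; rewrite indicN0 ?mulr0 // => hi.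
  by move: ij; rewrite (Teq_uniq hi hj) eqxx.
Qed.

Lemma sum_Tge (g : nat -> Omega -> R) m n w : Tge A n w ->
  \sum_(m <= i < n) g i w * \1_(Teq A i) w = 0.
Proof.
move=> h; rewrite big_nat_cond big1 // => i /andP[/andP[_ hi] _].
by rewrite indicN0 ?mulr0 // => hi'; exact: (Teq_notTge hi hi' h).
Qed.

Lemma Hc_Teq (g : nat -> nat -> Omega -> R) m n j w : (m <= j)%N -> Teq A j w ->
  Hc Y A g m n w = Y n w - (if (j < n)%N then g j n w else 0).
Proof. by move=> mj hj; rewrite /Hc (@sum_Teq (fun i => g i n) m n j w mj hj). Qed.

Lemma Hc_Tge (g : nat -> nat -> Omega -> R) m n w : Tge A n w ->
  Hc Y A g m n w = Y n w.
Proof. by move=> h; rewrite /Hc (@sum_Tge (fun i => g i n) m n w h) subr0. Qed.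

Lemma int_sumR (F : nat -> Omega -> R) m n :
  (forall i, (m <= i < n)%N -> P.-integrable setT (EFin \o F i)) ->
  P.-integrable setT (EFin \o (fun w => \sum_(m <= i < n) F i w)).
Proof.
move=> hF.
have := @integrable_sum _ _ _ P setT measurableT _ (index_iota m n)
  (fun i => (m <= i < n)%N) (fun i w => (F i w)%:E) hF.
move=> h; apply: (eq_integrable measurableT _ _ _ h) => w _ /=.
rewrite sumEFin; congr EFin; rewrite [RHS]big_nat_cond; apply: eq_bigl => i; by rewrite andbT.
Qed.

Lemma int_addR (f g : Omega -> R) : P.-integrable setT (EFin \o f) ->
  P.-integrable setT (EFin \o g) -> P.-integrable setT (EFin \o (fun w => f w + g w)).
Proof. by move=> i1 i2; have h := integrableD measurableT i1 i2; apply: (eq_integrable measurableT _ _ _ h). Qed.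

Lemma int_subR (f g : Omega -> R) : P.-integrable setT (EFin \o f) ->
  P.-integrable setT (EFin \o g) -> P.-integrable setT (EFin \o (fun w => f w - g w)).
Proof. by move=> i1 i2; have h := integrableB measurableT i1 i2; apply: (eq_integrable measurableT _ _ _ h). Qed.

End Pointwise.

Section Main.
Context {R : realType} {d : measure_display} {Omega : measurableType d}.
Variables (P : probability Omega R) (dz : measure_display) (Zt : measurableType dz)
  (K : nat) (Z : nat -> Omega -> Zt) (Y A : nat -> Omega -> R)
  (Yinf : nat -> Omega -> R) (Ycf : nat -> nat -> R -> Omega -> R)
  (gstar : nat -> nat -> Omega -> R).
Hypotheses
 (mZ : forall j, measurable_fun setT (Z j))
 (mY : forall j, measurable_fun setT (Y j))
 (mA : forall j, measurable_fun setT (A j))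
 (iYinf : forall k, (k <= K)%N -> P.-integrable setT (EFin \o Yinf k))
 (iYcf : forall m k, (m < k <= K)%N ->
     P.-integrable setT (EFin \o (fun w => Ycf k m (A m w) w)))
 (Ycf_le : forall k m a, (k <= m)%N -> Ycf k m a = Yinf k)
 (cons1 : forall m k, (m < k <= K)%N -> forall w, Teq A m w -> Y k w = Ycf k m (A m w) w)
 (cons2 : forall k, (k <= K)%N -> forall w, Tge A k w -> Y k w = Yinf k w)
 (PT : forall m k, (m < k <= K)%N -> forall f g : Omega -> R,
     cexp_version P (LAsig Z Y A m) (Teq A m) (fun w => Yinf k w - Yinf k.-1 w) f ->
     cexp_version P (Lsig Z Y A m) (Tgt A m) (fun w => Yinf k w - Yinf k.-1 w) g ->
     {ae P, forall w, Teq A m w -> f w = g w})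
 (Gs : forall m k, (m < k <= K)%N ->
     cexp_version P (LAsig Z Y A m) (Teq A m)
       (fun w => Ycf k m (A m w) w - Yinf k w) (gstar m k)).

Local Notation Tge_m := (Tge_meas mZ mY mA).
Local Notation Teq_m := (Teq_meas mZ mY mA).
Local Notation Tgt_m := (Tgt_meas mZ mY mA).
Local Notation LA_m := (LA_meas mZ mY mA).
Local Notation L_m := (L_meas mZ mY mA).

Lemma Y_Teq n j w : (n <= K)%N -> Teq A j w -> Y n w = Ycf n j (A j w) w.
Proof.
move=> nK hj; have [jn|nj] := ltnP j n.
- by apply: cons1 => //; rewrite jn.
- rewrite Ycf_le // cons2 //; apply: (Tge_le nj); exact: Teq_Tge.
Qed.

Lemma int_Y k : (k <= K)%N -> P.-integrable setT (EFin \o Y k).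
Proof.
move=> kK.
pose g := fun j w => Ycf k j (A j w) w.
have e w : Yinf k w * \1_(Tge A k) w + \sum_(0 <= j < k) g j w * \1_(Teq A j) w = Y k w.
  case: (Tge_or_Teq A k w) => [h|[j [jk h]]].
  - by rewrite indicN1 // mulr1 sum_Tge // addr0 cons2.
  - rewrite (indicN0 (Teq_notTge jk h)).
    rewrite mulr0 add0r (@sum_Teq _ _ _ _ g 0 k j w) // jk.
    by rewrite (Y_Teq kK h).
have h : P.-integrable setT (EFin \o (fun w => Yinf k w * \1_(Tge A k) w +
    \sum_(0 <= j < k) g j w * \1_(Teq A j) w)).
  apply: int_addR.
  - apply: integrable_indic_mul; first exact: Tge_m.
    apply: integrableS (iYinf kK) => //; exact: Tge_m.
  - apply: int_sumR => j /andP[_ jk].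
    apply: integrable_indic_mul; first exact: Teq_m.
    apply: integrableS (iYcf _) => //; [exact: Teq_m| by rewrite jk].
by apply: (eq_integrable measurableT _ _ _ h) => w _ /=; rewrite e.
Qed.

Lemma int_Hc (g : nat -> nat -> Omega -> R) m n : (n <= K)%N ->
  (forall j, (m <= j < n)%N -> P.-integrable (Teq A j) (EFin \o g j n)) ->
  P.-integrable setT (EFin \o Hc Y A g m n).
Proof.
move=> nK hg; apply: int_subR; first exact: int_Y.
apply: int_sumR => j jn; apply: integrable_indic_mul; first exact: Teq_m.
exact: hg.
Qed.

Definition Xd (g : nat -> nat -> Omega -> R) m k :=
  fun w => Hc Y A g m k w - Hc Y A g m k.-1 w.
Definition Yd k := fun w => Yinf k w - Yinf k.-1 w.

Lemma gs_int j n : (j < n <= K)%N -> P.-integrable (Teq A j) (EFin \o gstar j n).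
Proof. by move=> h; case: (Gs h). Qed.

Lemma KEY m k j S : (m <= j < k)%N -> (k <= K)%N -> LAsig Z Y A j S ->
  Int P (Teq A j `&` S) (fun w => Xd gstar m k w - Yd k w) = 0%E.
Proof.
move=> /andP[mj jk] kK hS.
have mD : measurable (Teq A j `&` S) by apply: measurableI; [exact: Teq_m| exact (@LA_meas _ _ _ _ _ Z Y A mZ mY mA j S hS)].
have sD : Teq A j `&` S `<=` Teq A j by exact: subIsetl.
pose W n := fun w => (Ycf n j (A j w) w - Yinf n w) - (if (j < n)%N then gstar j n w else 0).
have HW n : (n <= K)%N -> P.-integrable (Teq A j `&` S) (EFin \o W n) /\
    Int P (Teq A j `&` S) (W n) = 0%E.
  move=> nK; have [jn|nj] := ltnP j n.
  - have jnK : (j < n <= K)%N by rewrite jn.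
    have [_ i1 i2 e] := Gs jnK.
    have i1' : P.-integrable (Teq A j `&` S)
        (EFin \o (fun w => Ycf n j (A j w) w - Yinf n w)).
      by apply: integrableS i1 => //; exact: Teq_m.
    have i2' : P.-integrable (Teq A j `&` S) (EFin \o gstar j n).
      by apply: integrableS i2 => //; exact: Teq_m.
    have eW w : W n w = (Ycf n j (A j w) w - Yinf n w) - gstar j n w by rewrite /W jn.
    split.
    + apply: (eq_integrable mD _ _ _ (integrableB mD i1' i2')) => w _ /=.
      by rewrite eW.
    + rewrite (@Int_ext _ _ _ P _ _ (fun w => (Ycf n j (A j w) w - Yinf n w) - gstar j n w));
        last by move=> w _; exact: eW.
      by apply/(Int_eq_sub mD i1' i2'); exact: e.
  - have eW w : W n w = 0.
      by rewrite /W ltnNge nj /= Ycf_le // subrr subr0.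
    split.
    + apply: (eq_integrable mD _ _ _ (integrable0 P (Teq A j `&` S))) => w _ /=.
      by rewrite eW.
    + by apply: Int0 => w _; exact: eW.
have ew w : (Teq A j `&` S) w -> Xd gstar m k w - Yd k w = W k w - W k.-1 w.
  move=> [hj _]; rewrite /Xd /Yd (Hc_Teq Y gstar k mj hj) (Hc_Teq Y gstar k.-1 mj hj).
  have k1K : (k.-1 <= K)%N by lia.
  rewrite (Y_Teq kK hj) (Y_Teq k1K hj) /W jk.
  by ring.
have k1K : (k.-1 <= K)%N by lia.
rewrite (Int_ext _ ew) IntB //; [|exact: (HW k kK).1|exact: (HW k.-1 k1K).1].
by rewrite (HW k kK).2 (HW k.-1 k1K).2 sube0.
Qed.

Lemma setI_subl (B C S : set Omega) : B `<=` C -> C `&` (B `&` S) = B `&` S.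
Proof. by move=> BC; apply/seteqP; split => w; [case|move=> [hB hS]; split => //; exact: BC]. Qed.

Lemma Teq_sub_Tge m : Teq A m `<=` Tge A m. Proof. by move=> w; exact: Teq_Tge. Qed.
Lemma Tgt_sub_Tge m : Tgt A m `<=` Tge A m.
Proof. by move=> w h; apply: (Tge_le (leqnSn m)). Qed.

Lemma LA_I m S1 S2 : LAsig Z Y A m S1 -> LAsig Z Y A m S2 -> LAsig Z Y A m (S1 `&` S2).
Proof. move=> h1 h2; exact: (@measurableI _ (g_sigma_algebraType (GLA Z Y A m)) _ _ h1 h2). Qed.

Lemma int_Xd_gs m k : (m < k <= K)%N -> P.-integrable setT (EFin \o Xd gstar m k).
Proof.
move=> /andP[mk kK]; apply: int_subR; apply: int_Hc => //; try lia.
- move=> j /andP[_ jk]; apply: gs_int; rewrite jk; lia.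
- move=> j /andP[_ jk]; apply: gs_int; apply/andP; split => //; lia.
Qed.

Lemma int_Yd k : (k <= K)%N -> P.-integrable setT (EFin \o Yd k).
Proof. by move=> kK; apply: int_subR; apply: iYinf; lia. Qed.

Lemma int_XYd m k : (m < k <= K)%N ->
  P.-integrable setT (EFin \o (fun w => Xd gstar m k w - Yd k w)).
Proof.
move=> h; apply: int_subR; first exact: int_Xd_gs.
apply: int_Yd; by case/andP: h.
Qed.

Lemma Q_down m k S : (m < k <= K)%N -> Lsig Z Y A m S -> forall i, (m <= i <= k)%N ->
  Int P (Tge A i `&` S) (fun w => Xd gstar m k w - Yd k w) = 0%E.
Proof.
move=> /andP[mk kK] hS i /andP[mi ik].
apply: (down_ind (Q := fun i => Int P (Tge A i `&` S) (fun w => Xd gstar m k w - Yd k w) = 0%E) ik).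
- apply: Int0 => w [hw _].
  have hw' : Tge A k.-1 w by apply: (Tge_le _ hw); lia.
  rewrite /Xd /Yd (Hc_Tge Y gstar m hw) (Hc_Tge Y gstar m hw') !cons2 //; [|lia].
  by rewrite subrr.
- move=> i' /andP[ii' i'k] IH.
  have mS : measurable S by exact (@L_meas _ _ _ _ _ Z Y A mZ mY mA m S hS).
  rewrite (Tge_splitE A i') setIUl IntU //.
  + rewrite IH KEY ?adde0 //; first by apply/andP; split => //; lia.
    have mi' : (m <= i')%N by lia.
    exact: (@L_LA _ _ _ _ _ Z Y A m i' mi' S hS).
  + by apply: measurableI => //; exact: Teq_m.
  + by apply: measurableI => //; exact: Tge_m.
  + apply/disj_setPS => w [[h1 _] [h2 _]].
    exact: (Teq_notTge (ltnSn i') h1 h2).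
  + by apply: int_XYd; rewrite mk.
Qed.

Lemma star_gstar m k : (m < k <= K)%N -> coarse_star P Z Y A gstar m k.
Proof.
move=> mkK f g [mf iX if_ ef] [mg iX' ig eg].
have /andP[mk kK] := mkK.
have LAT : LAsig Z Y A m (Teq A m) by exact: Teq_LA.
have LAG : LAsig Z Y A m (Tgt A m) by exact: Tgt_LA.
have iYdk := int_Yd kK.
have vf : cexp_version P (LAsig Z Y A m) (Teq A m) (Yd k) f.
  split => //.
  - by apply: integrableS iYdk => //; exact: Teq_m.
  - by apply: integrableS if_ => //; [exact: Tge_m|exact: Teq_m|exact: Teq_sub_Tge].
  - move=> S hS.
    have hS' := LA_I LAT hS.
    have mD : measurable (Teq A m `&` S) by exact (@LA_meas _ _ _ _ _ Z Y A mZ mY mA m _ hS').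
    have := ef _ hS'; rewrite setI_subl; last exact: Teq_sub_Tge.
    move=> <-; apply/esym.
    have i1 : P.-integrable (Teq A m `&` S) (EFin \o Xd gstar m k).
      by apply: integrableS (int_Xd_gs mkK) => //.
    have i2 : P.-integrable (Teq A m `&` S) (EFin \o Yd k).
      by apply: integrableS iYdk => //.
    apply/(Int_eq_sub mD i1 i2).
    by apply: KEY => //; rewrite leqnn mk.
have vg : cexp_version P (Lsig Z Y A m) (Tgt A m) (Yd k) g.
  split => //.
  - by apply: integrableS iYdk => //; exact: Tgt_m.
  - move=> S hS.
    have mS : measurable S by exact (@L_meas _ _ _ _ _ Z Y A mZ mY mA m S hS).
    have mD : measurable (Tgt A m `&` S) by apply: measurableI => //; exact: Tgt_m.
    rewrite -(eg _ hS); apply/esym.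
    have i1 : P.-integrable (Tgt A m `&` S) (EFin \o Xd gstar m k).
      by apply: integrableS (int_Xd_gs mkK) => //.
    have i2 : P.-integrable (Tgt A m `&` S) (EFin \o Yd k).
      by apply: integrableS iYdk => //.
    apply/(Int_eq_sub mD i1 i2).
    by apply: (Q_down mkK hS); rewrite mk ltnW.
have aeT := PT mkK vf vg.
have aeG : {ae P, forall w, Tgt A m w -> f w = g w}.
  apply: (@cexp_unique _ _ _ P (GLA Z Y A m) (GLA_meas mZ mY mA (m:=m)) _ (Tgt_m m)) => //.
  - move=> U mU; exact: (@L_LA _ _ _ _ _ Z Y A m m (leqnn m) _ (mg U mU)).
  - by apply: integrableS if_ => //; [exact: Tge_m|exact: Tgt_m|exact: Tgt_sub_Tge].
  - move=> S hS.
    have [S' [hS' e]] := trace_LA_L hS.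
    have LAS' : LAsig Z Y A m S' by exact: (@L_LA _ _ _ _ _ Z Y A m m (leqnn m) _ hS').
    have e' : Tgt A m `&` S = Tgt A m `&` S' by rewrite setIC e setIC.
    have hTS := LA_I LAG hS.
    have := ef _ hTS; rewrite setI_subl; last exact: Tgt_sub_Tge.
    move=> <-; rewrite e'; exact: eg.
apply: filterS2 aeT aeG => w h1 h2 hw.
case: (Tge_split hw) => h; [exact: h1|exact: h2].
Qed.

Lemma pre_to_mfun (H : set (set Omega)) (f : Omega -> R) :
  (forall U, measurable U -> <<s H >> (f @^-1` U)) ->
  measurable_fun (setT : set (g_sigma_algebraType H)) (f : g_sigma_algebraType H -> R).
Proof. by move=> h _ U mU; rewrite setTI; exact: h. Qed.

Lemma mfun_to_pre (H : set (set Omega)) (f : Omega -> R) :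
  measurable_fun (setT : set (g_sigma_algebraType H)) (f : g_sigma_algebraType H -> R) ->
  (forall U, measurable U -> <<s H >> (f @^-1` U)).
Proof. by move=> mf U mU; have := mf measurableT U mU; rewrite setTI. Qed.

Section Uniq.
Variable gamma : nat -> nat -> Omega -> R.
Hypotheses
  (mga : forall m k, (m < k <= K)%N ->
        forall U : set R, measurable U -> LAsig Z Y A m (gamma m k @^-1` U))
  (iga : forall m k, (m < k <= K)%N -> P.-integrable (Teq A m) (EFin \o gamma m k))
  (sga : forall m k, (m < k <= K)%N -> coarse_star P Z Y A gamma m k).

Lemma int_Xd_ga m k : (m < k <= K)%N -> P.-integrable setT (EFin \o Xd gamma m k).
Proof.
move=> /andP[mk kK]; apply: int_subR; apply: int_Hc => //; try lia.
- move=> j /andP[_ jk]; apply: iga; rewrite jk; lia.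
- move=> j /andP[_ jk]; apply: iga; apply/andP; split => //; lia.
Qed.

Lemma delta_ae n m k : (forall m' k', (m' < k' <= K)%N -> (k' - m' <= n)%N ->
    {ae P, forall w, Teq A m' w -> gamma m' k' w = gstar m' k' w}) ->
  (m < k <= K)%N -> (k - m <= n.+1)%N ->
  {ae P, forall w, Tge A m w -> Xd gamma m k w =
     Xd gstar m k w - (gamma m k w - gstar m k w) * \1_(Teq A m) w}.
Proof.
move=> IH /andP[mk kK] kmn.
apply: (down_ind (Q := fun i => {ae P, forall w, Tge A i w -> Xd gamma m k w =
     Xd gstar m k w - (gamma m k w - gstar m k w) * \1_(Teq A m) w}) (ltnW mk)).
- apply: aeW => w hw.
  have hw' : Tge A k.-1 w by apply: (Tge_le _ hw); lia.
  rewrite /Xd (Hc_Tge Y gamma m hw) (Hc_Tge Y gamma m hw').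
  rewrite (Hc_Tge Y gstar m hw) (Hc_Tge Y gstar m hw').
  by rewrite (indicN0 (Teq_notTge mk^~ hw)) mulr0 subr0.
- move=> i /andP[mi ik] Qi.
  have E1 : {ae P, forall w, Teq A i w -> (m < i)%N -> gamma i k w = gstar i k w}.
    have [mi'|im] := ltnP m i.
    + have h : (i < k <= K)%N by rewrite ik.
      have := IH i k h ltac:(lia).
      by apply: filterS => w hw /hw.
    + by apply: aeW => w _.
  have E2 : {ae P, forall w, Teq A i w -> (i < k.-1)%N -> gamma i k.-1 w = gstar i k.-1 w}.
    have [ik1|k1i] := ltnP i k.-1.
    + have h : (i < k.-1 <= K)%N by rewrite ik1; lia.
      have := IH i k.-1 h ltac:(lia).
      by apply: filterS => w hw /hw.
    + by apply: aeW => w _.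
  apply: filterS3 E1 E2 Qi => w e1 e2 q hw.
  case: (Tge_split hw) => [hi|]; last exact: q.
  rewrite /Xd (Hc_Teq Y gamma k mi hi) (Hc_Teq Y gamma k.-1 mi hi).
  rewrite (Hc_Teq Y gstar k mi hi) (Hc_Teq Y gstar k.-1 mi hi) ik.
  have [eim|nim] := eqVneq i m.
  + subst i; rewrite (indicN1 hi) mulr1.
    case: ifPn => h.
    * by rewrite (e2 hi h); ring.
    * by ring.
  + have nT : ~ Teq A m w by move=> hm; move: nim; rewrite (Teq_uniq hi hm) eqxx.
    rewrite (indicN0 nT) mulr0 subr0 e1 //; last by move: nim mi; lia.
    by case: ifPn => h; rewrite ?(e2 hi h).
Qed.

Lemma uniq_step n m k : (forall m' k', (m' < k' <= K)%N -> (k' - m' <= n)%N ->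
    {ae P, forall w, Teq A m' w -> gamma m' k' w = gstar m' k' w}) ->
  (m < k <= K)%N -> (k - m <= n.+1)%N ->
  {ae P, forall w, Teq A m w -> gamma m k w = gstar m k w}.
Proof.
move=> IH mkK kmn; have /andP[mk kK] := mkK.
have Dae := delta_ae IH mkK kmn.
pose D := fun w => gamma m k w - gstar m k w.
have iXs := int_Xd_gs mkK; have iXg := int_Xd_ga mkK.
have TgeM := Tge_m m; have TgtM := Tgt_m m; have TeqM := Teq_m m.
have [fs vfs] : exists f, cexp_version P (LAsig Z Y A m) (Tge A m) (Xd gstar m k) f.
  exact: (cexp_exists P (GLA Z Y A m) (@GLA_meas _ _ _ _ _ Z Y A mZ mY mA m) (Tge A m) TgeM
            (Xd gstar m k) (integrableS measurableT TgeM (subsetT _) iXs)).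
have [gs vgs] : exists g, cexp_version P (Lsig Z Y A m) (Tgt A m) (Xd gstar m k) g.
  exact: (cexp_exists P (GL Z Y A m) (@GL_meas _ _ _ _ _ Z Y A mZ mY mA m) (Tgt A m) TgtM
            (Xd gstar m k) (integrableS measurableT TgtM (subsetT _) iXs)).
have star_s := star_gstar mkK vfs vgs.
pose f := fun w => fs w - D w * \1_(Teq A m) w.
have iDm : P.-integrable (Teq A m) (EFin \o D).
  have h := integrableB TeqM (iga mkK) (gs_int mkK).
  by apply: (eq_integrable TeqM _ _ _ h) => w _.
have iD1 : P.-integrable setT (EFin \o (fun w => D w * \1_(Teq A m) w)).
  exact: integrable_indic_mul.
have mXg : measurable_fun setT (EFin \o Xd gamma m k) by exact: measurable_int iXg.
have mXs1 : measurable_fun setT (EFin \o (fun w => Xd gstar m k w - D w * \1_(Teq A m) w)).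
  exact: (measurable_int P (int_subR iXs iD1)).
case: vfs => mfs iXs' ifs efs.
case: vgs => mgs iXs'' igs egs.
have vf : cexp_version P (LAsig Z Y A m) (Tge A m) (Xd gamma m k) f.
  split.
  - apply: mfun_to_pre; apply: measurable_funB; first exact: pre_to_mfun.
    apply: measurable_funM; last by apply: measurable_indic; exact: Teq_LA.
    apply: measurable_funB; apply: pre_to_mfun.
    + exact: mga.
    + by case: (Gs mkK).
  - exact: integrableS iXg.
  - have h := integrableB TgeM ifs (integrableS measurableT TgeM (subsetT _) iD1).
    by apply: (eq_integrable TgeM _ _ _ h) => w _.
  - move=> S hS.
    have mD : measurable (Tge A m `&` S).
      by apply: measurableI => //; exact (@LA_meas _ _ _ _ _ Z Y A mZ mY mA m S hS).
    change (Int P (Tge A m `&` S) (Xd gamma m k) = Int P (Tge A m `&` S) f).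
    rewrite (_ : Int P (Tge A m `&` S) (Xd gamma m k) =
       Int P (Tge A m `&` S) (fun w => Xd gstar m k w - D w * \1_(Teq A m) w)); last first.
      apply: ae_eq_integral => //.
      + exact: measurable_funTS mXg.
      + exact: measurable_funTS mXs1.
      + by apply: filterS Dae => w h [hw _]; rewrite /= h.
    have i1 : P.-integrable (Tge A m `&` S) (EFin \o Xd gstar m k) by exact: integrableS iXs.
    have i2 : P.-integrable (Tge A m `&` S) (EFin \o (fun w => D w * \1_(Teq A m) w)).
      by exact: integrableS iD1.
    have i3 : P.-integrable (Tge A m `&` S) (EFin \o fs).
      by apply: integrableS ifs => //; exact: subIsetl.
    rewrite (IntB mD i1 i2) /f (IntB mD i3 i2).
    congr (_ - _)%E; exact: efs.
have vg : cexp_version P (Lsig Z Y A m) (Tgt A m) (Xd gamma m k) gs.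
  split => //.
  - exact: integrableS iXg.
  - move=> S hS.
    have mD : measurable (Tgt A m `&` S).
      by apply: measurableI => //; exact (@L_meas _ _ _ _ _ Z Y A mZ mY mA m S hS).
    rewrite -(egs S hS).
    apply: ae_eq_integral => //.
    + exact: measurable_funTS mXg.
    + exact: measurable_funTS (measurable_int _ iXs).
    + apply: filterS Dae => w h [hw _]; rewrite /= (h (Tgt_sub_Tge hw)).
      have nT : ~ Teq A m w by move=> h'; exact: (Teq_notTge (ltnSn m) h' hw).
      by rewrite (indicN0 nT) mulr0 subr0.
have sg := sga mkK vf vg.
apply: filterS2 star_s sg => w h1 h2 hw.
have hw' : Tge A m w by exact: Teq_Tge.
have := h2 hw'; rewrite /f -(h1 hw') (indicN1 hw) mulr1 /D => e.
by apply/eqP; rewrite -subr_eq0; apply/eqP; lra.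
Qed.

End Uniq.

Lemma uniq_all (gamma : nat -> nat -> Omega -> R) :
  (forall m k, (m < k <= K)%N ->
        forall U : set R, measurable U -> LAsig Z Y A m (gamma m k @^-1` U)) ->
  (forall m k, (m < k <= K)%N -> P.-integrable (Teq A m) (EFin \o gamma m k)) ->
  (forall m k, (m < k <= K)%N -> coarse_star P Z Y A gamma m k) ->
  forall m k, (m < k <= K)%N ->
    {ae P, forall w, Teq A m w -> gamma m k w = gstar m k w}.
Proof.
move=> mga iga sga.
suff H : forall n m k, (m < k <= K)%N -> (k - m <= n)%N ->
    {ae P, forall w, Teq A m w -> gamma m k w = gstar m k w}.
  by move=> m k mk; apply: (H (k - m)%N).
elim=> [|n IH] m k mk km.
  by exfalso; move: mk km; lia.
exact: (uniq_step mga iga sga IH mk km).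
Qed.

End Main.

End Part2.
Import Part2.

Theorem lemma3 (R : realType) (d : measure_display) (Omega : measurableType d)
  (P : probability Omega R) (dz : measure_display) (Zt : measurableType dz)
  (K : nat) (Z : nat -> Omega -> Zt) (Y A : nat -> Omega -> R)
  (Yinf : nat -> Omega -> R) (Ycf : nat -> nat -> R -> Omega -> R)
  (gstar : nat -> nat -> Omega -> R) :
  (* observed data are random variables *)
  (forall j, measurable_fun setT (Z j)) ->
  (forall j, measurable_fun setT (Y j)) ->
  (forall j, measurable_fun setT (A j)) ->
  (* integrability of the counterfactual outcomes *)
  (forall k, (k <= K)%N -> P.-integrable setT (EFin \o Yinf k)) ->
  (forall m k, (m < k <= K)%N ->
     P.-integrable setT (EFin \o (fun w => Ycf k m (A m w) w))) ->
  (* Y_k(m, a_m) = Y_k(oo) for k <= m *)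
  (forall k m a, (k <= m)%N -> Ycf k m a = Yinf k) ->
  (* coarse consistency *)
  (forall m k, (m < k <= K)%N -> forall w, Teq A m w -> Y k w = Ycf k m (A m w) w) ->
  (forall k, (k <= K)%N -> forall w, Tge A k w -> Y k w = Yinf k w) ->
  (* coarse positivity *)
  (forall m, (m <= K)%N -> forall p : Omega -> R,
     cexp_version P (Lsig Z Y A m) (Tge A m) (\1_[set w | A m w = 0]) p ->
     {ae P, forall w, Tge A m w -> 0 < p w}) ->
  (* coarse parallel trends *)
  (forall m k, (m < k <= K)%N -> forall f g : Omega -> R,
     cexp_version P (LAsig Z Y A m) (Teq A m) (fun w => Yinf k w - Yinf k.-1 w) f ->
     cexp_version P (Lsig Z Y A m) (Tgt A m) (fun w => Yinf k w - Yinf k.-1 w) g ->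
     {ae P, forall w, Teq A m w -> f w = g w}) ->
  (* gstar are the true coarse blip functions (versions of the defining
     conditional expectations, measurable in (Lbar_m, A_m)) *)
  (forall m k, (m < k <= K)%N ->
     cexp_version P (LAsig Z Y A m) (Teq A m)
       (fun w => Ycf k m (A m w) w - Yinf k w) (gstar m k)) ->
  (forall m k, (m < k <= K)%N -> coarse_star P Z Y A gstar m k) /\
  (forall gamma : nat -> nat -> Omega -> R,
     (forall m k, (m < k <= K)%N ->
        forall U : set R, measurable U -> LAsig Z Y A m (gamma m k @^-1` U)) ->
     (forall m k, (m < k <= K)%N -> P.-integrable (Teq A m) (EFin \o gamma m k)) ->
     (forall m k, (m < k <= K)%N -> coarse_star P Z Y A gamma m k) ->
     forall m k, (m < k <= K)%N ->
       {ae P, forall w, Teq A m w -> gamma m k w = gstar m k w}).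

Proof.
move=> mZ mY mA iYinf iYcf Ycf_le cons1 cons2 pos PT Gs; split.
- move=> m k mk.
  exact: (star_gstar mZ mY mA iYinf iYcf Ycf_le cons1 cons2 PT Gs mk).
- move=> gamma mga iga sga m k mk.
  exact: (uniq_all mZ mY mA iYinf iYcf Ycf_le cons1 cons2 PT Gs mga iga sga mk).
Qed.
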